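(* Define $\kappa_4(\vec c)=\frac{\sum_j c_j^4}{\left(\sum_j c_j^2\right)^2}$ for nonzero $\vec c\in\mathbb{R}_{\ge0}^N$. For every nonzero $\vec c=(c_1,\dots,c_N)\in\mathbb{R}_{\ge0}^N$ whose entries are not all equal and every real $\alpha>0$, $\kappa_4(c_1+\alpha,\dots,c_N+\alpha)<\kappa_4(\vec c)$. *)

(* Defs.v *)
From HB Require Import structures.
From mathcomp Require Import all_boot all_order all_algebra.
From mathcomp Require Import reals.
Set Implicit Arguments. Unset Strict Implicit. Unset Printing Implicit Defensive.
Import Order.TTheory GRing.Theory Num.Theory.
Local Open Scope ring_scope.

Definition kappa4 (R : realType) (N : nat) (c : 'I_N -> R) : R :=
  (\sum_(j < N) c j ^+ 4) / (\sum_(j < N) c j ^+ 2) ^+ 2.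

(* Main.v *)
Require Import Defs.
From HB Require Import structures.
From mathcomp Require Import all_boot all_order all_algebra.
From mathcomp Require Import reals.
From mathcomp Require Import ring lra.
Import Order.TTheory GRing.Theory Num.Theory.
Local Open Scope ring_scope.

Section Aux.
Variables (R : realType) (N : nat).

Lemma dsum_sym2 (f : 'I_N -> 'I_N -> R) :
  (\sum_i \sum_j f i j) + (\sum_i \sum_j f i j)
  = \sum_i \sum_j (f i j + f j i).
Proof.
rewrite {2}exchange_big -big_split /=.
by apply: eq_bigr => i _; rewrite -big_split.
Qed.

Lemma dsum_ge0 (f : 'I_N -> 'I_N -> R) :
  (forall i j, 0 <= f i j + f j i) -> 0 <= \sum_i \sum_j f i j.
Proof.
move=> H.
have : 0 <= (\sum_i \sum_j f i j) + (\sum_i \sum_j f i j).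
  by rewrite dsum_sym2; apply: sumr_ge0 => i _; apply: sumr_ge0.
lra.
Qed.

Lemma sum_gt0 (F : 'I_N -> R) j0 :
  (forall i, 0 <= F i) -> 0 < F j0 -> 0 < \sum_i F i.
Proof.
move=> H H0; rewrite (bigD1 j0) //=; apply: ltr_pwDl => //.
by apply: sumr_ge0.
Qed.

Lemma dsum_gt0 (f : 'I_N -> 'I_N -> R) i0 j0 :
  (forall i j, 0 <= f i j + f j i) -> 0 < f i0 j0 + f j0 i0 ->
  0 < \sum_i \sum_j f i j.
Proof.
move=> H H0.
have : 0 < (\sum_i \sum_j f i j) + (\sum_i \sum_j f i j).
  rewrite dsum_sym2; apply: (@sum_gt0 _ i0).
    by move=> i; apply: sumr_ge0.
  by apply: (@sum_gt0 _ j0).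
lra.
Qed.

Lemma prod_diff (a b u v : 'I_N -> R) :
  (\sum_i a i) * (\sum_j b j) - (\sum_i u i) * (\sum_j v j)
  = \sum_i \sum_j (a i * b j - u i * v j).
Proof.
rewrite !mulr_suml -sumrB; apply: eq_bigr => i _.
by rewrite !mulr_sumr -sumrB.
Qed.

End Aux.

Ltac pos := repeat first [assumption | apply: ltr01 | apply: ler01 | apply: ltr0Sn | apply: sqr_ge0 | apply: mulr_ge0 | apply: addr_ge0
  | apply: mulr_gt0 | apply: exprn_ge0 | apply: exprn_gt0 | apply: ltW ].

Theorem theorem13 (R : realType) (N : nat) (c : 'I_N -> R) (alpha : R) :
  (forall j, 0 <= c j) ->
  (exists j, c j != 0) ->
  (exists i j, c i != c j) ->
  0 < alpha ->
  kappa4 (fun j => c j + alpha) < kappa4 c.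
Proof.
move=> c0 [k ck] [i0 [j0 cij]] ha.
pose P n := \sum_(j < N) c j ^+ n.
have P0 : P 0%N = \sum_(j < N) c j ^+ 0 by [].
have HA : P 2%N * P 3%N <= P 1%N * P 4%N.
  rewrite -subr_ge0 /P prod_diff; apply: dsum_ge0 => i j.
  have hx := c0 i; have hy := c0 j; set x := c i in hx *; set y := c j in hy *.
  have e : x ^+ 1 * y ^+ 4 - x ^+ 2 * y ^+ 3 + (y ^+ 1 * x ^+ 4 - y ^+ 2 * x ^+ 3)
    = x * y * (x + y) * (x - y) ^+ 2 by ring.
  by rewrite e; pos.
have HB : P 2%N * P 2%N <= P 1%N * P 3%N.
  rewrite -subr_ge0 /P prod_diff; apply: dsum_ge0 => i j.
  have hx := c0 i; have hy := c0 j; set x := c i in hx *; set y := c j in hy *.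
  have e : x ^+ 1 * y ^+ 3 - x ^+ 2 * y ^+ 2 + (y ^+ 1 * x ^+ 3 - y ^+ 2 * x ^+ 2)
    = x * y * (x - y) ^+ 2 by ring.
  by rewrite e; pos.
have HC : P 2%N * P 2%N < P 0%N * P 4%N.
  rewrite -subr_gt0 /P prod_diff; apply: (@dsum_gt0 _ _ _ i0 j0).
    move=> i j; set x := c i; set y := c j.
    have e : x ^+ 0 * y ^+ 4 - x ^+ 2 * y ^+ 2 + (y ^+ 0 * x ^+ 4 - y ^+ 2 * x ^+ 2)
      = (x ^+ 2 - y ^+ 2) ^+ 2 by ring.
    by rewrite e sqr_ge0.
  have hx := c0 i0; have hy := c0 j0; move: cij => nxy; set x := c i0 in hx nxy *; set y := c j0 in hy nxy *.
  have e : x ^+ 0 * y ^+ 4 - x ^+ 2 * y ^+ 2 + (y ^+ 0 * x ^+ 4 - y ^+ 2 * x ^+ 2)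
    = ((x - y) * (x + y)) ^+ 2 by ring.
  rewrite e exprn_even_gt0 // mulf_eq0 negb_or subr_eq0 nxy /= paddr_eq0 //.
  by apply: contra nxy => /andP[/eqP -> /eqP ->].
have P0p : 0 < P 0%N by apply: (@sum_gt0 _ _ _ k) => // i; rewrite expr0.
have P1p : 0 <= P 1%N by apply: sumr_ge0 => i _; rewrite expr1.
have P2p : 0 < P 2%N.
  apply: (@sum_gt0 _ _ _ k) => [i|]; first by rewrite sqr_ge0.
  by rewrite exprn_gt0 // lt0r ck c0.
have P3p : 0 <= P 3%N by apply: sumr_ge0 => i _; rewrite exprn_ge0.
have P4p : 0 <= P 4%N by apply: sumr_ge0 => i _; rewrite exprn_ge0.
have E2 : \sum_(j < N) (c j + alpha) ^+ 2
    = P 2%N + 2 * alpha * P 1%N + alpha ^+ 2 * P 0%N.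
  rewrite /P !mulr_sumr -!big_split /=; apply: eq_bigr => j _; ring.
have E4 : \sum_(j < N) (c j + alpha) ^+ 4
    = P 4%N + 4 * alpha * P 3%N + 6 * alpha ^+ 2 * P 2%N
      + 4 * alpha ^+ 3 * P 1%N + alpha ^+ 4 * P 0%N.
  rewrite /P !mulr_sumr -!big_split /=; apply: eq_bigr => j _; ring.
rewrite /kappa4 E2 E4 -/(P 4%N) -/(P 2%N).
set S2 := P 2%N + _ + _.
have S2p : 0 < S2.
  rewrite /S2 -addrA; apply: ltr_pwDl => //; pos.
rewrite ltr_pdivrMr ?exprn_gt0 //.
rewrite [_ / _ * _]mulrAC ltr_pdivlMr ?exprn_gt0 //.
rewrite -subr_gt0.
have e : (P 4%N) * S2 ^+ 2 -
   ((P 4%N) + 4 * alpha * (P 3%N) + 6 * alpha ^+ 2 * (P 2%N) + 4 * alpha ^+ 3 * (P 1%N) + alpha ^+ 4 * (P 0%N)) * (P 2%N) ^+ 2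
  = 4 * alpha * (P 2%N) * ((P 1%N) * (P 4%N) - (P 2%N) * (P 3%N))
    + alpha ^+ 2 * (4 * ((P 1%N) * ((P 1%N) * (P 4%N) - (P 2%N) * (P 3%N)) + (P 2%N) * ((P 1%N) * (P 3%N) - (P 2%N) * (P 2%N)))
                    + 2 * (P 2%N) * ((P 0%N) * (P 4%N) - (P 2%N) * (P 2%N)))
    + 4 * alpha ^+ 3 * (P 1%N) * ((P 0%N) * (P 4%N) - (P 2%N) * (P 2%N))
    + alpha ^+ 4 * (P 0%N) * ((P 0%N) * (P 4%N) - (P 2%N) * (P 2%N)).
  rewrite /S2; ring.
rewrite e.
have hA : 0 <= (P 1%N) * (P 4%N) - (P 2%N) * (P 3%N) by rewrite subr_ge0.
have hB : 0 <= (P 1%N) * (P 3%N) - (P 2%N) * (P 2%N) by rewrite subr_ge0.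
have hC : 0 < (P 0%N) * (P 4%N) - (P 2%N) * (P 2%N) by rewrite subr_gt0.
have hC' := ltW hC.
apply: ltr_wpDl; last by pos.
pos.
Qed.
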